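(* Let $k\le n$ and $\phi(k)<m<2n$. Then the value in $U_q^+(\mathfrak{sp}_{2n})$ of the bracketed word $[x_k\,x_{k+1}\cdots x_n\,y_m]$, where $y_m=v[n+1,m]=[x_{n+1},[x_{n+2},[\dots,[x_{m-1},x_m]\dots]]]$, does not depend on the arrangement of the (skew) brackets on the sequence $x_k,x_{k+1},\dots,x_n,y_m$.
   Context: Let $\mathbf{k}$ be a field, $G$ an abelian group, $n\ge2$, $X=\{x_1,\dots,x_n\}$, $g_i\in G$, characters $\chi^i:G\to\mathbf{k}^*$, $p_{ij}=\chi^i(g_j)$; for homogeneous $u,v$, $p(u,v)=\chi^u(g_v)$ (obtained by replacing $x_i$ by $g_i$, resp. $\chi^i$). $G\langle X\rangle$: skew group algebra with $x_ig=\chi^i(g)gx_i$; skew bracket $[u,v]=uv-p(u,v)vu$. Fix $q\in\mathbf{k}^*$, $q^3\ne1$, $q\ne-1$; assume $p_{ii}=q$ ($i<n$), $p_{nn}=q^2$, $p_{i,i-1}p_{i-1,i}=q^{-1}$ ($1<i<n$), $p_{n-1,n}p_{n,n-1}=q^{-2}$, $p_{ij}p_{ji}=1$ ($j>i+1$). $U_q^+(\mathfrak{sp}_{2n})$ is the quotient of $G\langle X\rangle$ by the ideal generated by $[x_i,[x_i,x_{i+1}]]$, $[[x_i,x_{i+1}],x_{i+1}]$ ($1\le i<n-1$), $[x_i,x_j]$ ($j>i+1$), $[[x_{n-1},x_n],x_n]$, $[x_{n-1},[x_{n-1},[x_{n-1},x_n]]]$. For $n<i<2n$, $x_i:=x_{2n-i}$;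 $\phi(i)=2n-i$. *)

(* Defs.v *)
From HB Require Import structures.
From mathcomp Require Import all_boot all_order all_algebra.
Set Implicit Arguments. Unset Strict Implicit. Unset Printing Implicit Defensive.
Import Order.TTheory GRing.Theory Num.Theory.
Local Open Scope ring_scope.

(* Binary trees (bracketings) with leaves labelled in A. *)
Inductive btree (A : Type) : Type :=
| BLeaf of A
| BNode of btree A & btree A.
Arguments BLeaf {A} _.
Arguments BNode {A} _ _.

Fixpoint frontier (A : Type) (t : btree A) : seq A :=
  match t with BLeaf a => [:: a] | BNode l r => frontier l ++ frontier r end.

Fixpoint bjoin (A : Type) (t : btree (btree A)) : btree A :=
  match t with BLeaf s => s | BNode l r => BNode (bjoin l) (bjoin r) end.

Fixpoint rcomb (a : nat) (s : seq nat) : btree nat :=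
  match s with [::] => BLeaf a | b :: s' => BNode (BLeaf a) (rcomb b s') end.

Section SkewAlgebra.
(* K : the field k; G : the abelian group, written additively (zmodType);
   generators x_1..x_n are indexed by the naturals 1..n;
   g i = g_i, chi i = chi^i. *)
Variables (K : fieldType) (G : zmodType) (n : nat).
Variables (g : nat -> G) (chi : nat -> G -> K).

Definition pp (i j : nat) : K := chi i (g j).

(* An element of G<X>: a formal finite sum of terms c * h * w,
   c : K, h : G, w a word in the letters 1..n. *)
Definition elt := seq (K * G * seq nat).

Definition chiw (w : seq nat) (h : G) : K := \prod_(i <- w) chi i h.
Definition gw (w : seq nat) : G := \sum_(i <- w) g i.

Definition eadd (a b : elt) : elt := a ++ b.
Definition escale (c : K) (a : elt) : elt :=
  [seq (c * t.1.1, t.1.2, t.2) | t <- a].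
(* (c h u)(d h' v) = c d chi^u(h') (h h') (u v), from x_i h' = chi^i(h') h' x_i *)
Definition emul (a b : elt) : elt :=
  [seq (s.1.1 * t.1.1 * chiw s.2 t.1.2, s.1.2 + t.1.2, s.2 ++ t.2) | s <- a, t <- b].

Definition coef (a : elt) (h : G) (w : seq nat) : K :=
  \sum_(t <- a | (t.1.2 == h) && (t.2 == w)) t.1.1.
Definition eeq (a b : elt) : Prop := forall h w, coef a h w = coef b h w.

Definition inGX (a : elt) : bool :=
  all (fun t => all (fun i => (0 < i <= n)%N) t.2) a.

Definition xgen (i : nat) : elt := [:: (1, 0, [:: i])].

(* p(u,v) = chi^u(g_v) for homogeneous u, v of degrees (words) du, dv *)
Definition pdeg (du dv : seq nat) : K := chiw du (gw dv).

Definition sbracket (du dv : seq nat) (u v : elt) : elt :=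
  eadd (emul u v) (escale (- pdeg du dv) (emul v u)).

(* x_i := x_{2n-i} for n < i < 2n *)
Definition letter (i : nat) : nat := if (i <= n)%N then i else (2 * n - i)%N.

Fixpoint bval (t : btree nat) : elt :=
  match t with
  | BLeaf i => xgen (letter i)
  | BNode l r => sbracket (map letter (frontier l)) (map letter (frontier r))
                          (bval l) (bval r)
  end.

(* the defining relators of U_q^+(sp_2n), as bracketed words *)
Definition is_rel (t : btree nat) : Prop :=
  (exists i, (1 <= i)%N /\ (i.+1 < n)%N /\
     (t = BNode (BLeaf i) (BNode (BLeaf i) (BLeaf i.+1)) \/
      t = BNode (BNode (BLeaf i) (BLeaf i.+1)) (BLeaf i.+1)))
  \/ (exists i j, (1 <= i)%N /\ (i.+1 < j)%N /\ (j <= n)%N /\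
        t = BNode (BLeaf i) (BLeaf j))
  \/ t = BNode (BNode (BLeaf n.-1) (BLeaf n)) (BLeaf n)
  \/ t = BNode (BLeaf n.-1) (BNode (BLeaf n.-1) (BNode (BLeaf n.-1) (BLeaf n))).

Inductive in_ideal : elt -> Prop :=
| in_ideal0 : in_ideal [::]
| in_idealS (z a b : elt) (t : btree nat) :
    in_ideal z -> inGX a -> inGX b -> is_rel t ->
    in_ideal (eadd z (emul (emul a (bval t)) b)).

Definition Ueq (a b : elt) : Prop :=
  exists z, in_ideal z /\ eeq (eadd a (escale (-1) b)) z.

End SkewAlgebra.

Definition ym (n m : nat) : btree nat := rcomb n.+1 (iota n.+2 (m - n.+1)).
Definition atoms (n k m : nat) : seq (btree nat) :=
  [seq BLeaf i | i <- iota k (n - k).+1] ++ [:: ym n m].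

(* Main.v *)
Require Import Defs.
From HB Require Import structures.
From mathcomp Require Import all_boot all_order all_algebra.
From mathcomp Require Import ring zify.
From Stdlib Require Import Setoid Morphisms.
Set Implicit Arguments. Unset Strict Implicit. Unset Printing Implicit Defensive.
Import GRing.Theory.
Local Open Scope ring_scope.

Section Alg.
Variables (K : fieldType) (G : zmodType) (g : nat -> G) (chi : nat -> G -> K).
Hypothesis chiM : forall i a b, chi i (a + b) = chi i a * chi i b.
Hypothesis chi0 : forall i, chi i 0 = 1.

Notation elt := (elt K G).
Definition ev (F : G -> seq nat -> K) (a : elt) : K :=
  \sum_(t <- a) t.1.1 * F t.1.2 t.2.
Definition eqv (a b : elt) := forall F, ev F a = ev F b.

Lemma ev_cat F (a b : elt) : ev F (eadd a b) = ev F a + ev F b.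
Proof. by rewrite /ev /eadd big_cat. Qed.
Lemma ev_nil F : ev F [::] = 0.
Proof. by rewrite /ev big_nil. Qed.
Lemma ev_scale F c (a : elt) : ev F (escale c a) = c * ev F a.
Proof. by rewrite /ev /escale big_map mulr_sumr; apply: eq_bigr => t _; rewrite mulrA. Qed.
Lemma ev_emul F (a b : elt) : ev F (emul chi a b) =
  \sum_(s <- a) s.1.1 * ev (fun h w => chiw chi s.2 h * F (s.1.2 + h) (s.2 ++ w)) b.
Proof.
rewrite /ev /emul big_allpairs_dep; apply: eq_bigr => s _.
by rewrite mulr_sumr; apply: eq_bigr => t _ /=; ring.
Qed.
Lemma ev_emul_l F (a b : elt) : ev F (emul chi a b) =
  ev (fun h w => ev (fun h' w' => chiw chi w h' * F (h + h') (w ++ w')) b) a.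
Proof. by rewrite ev_emul. Qed.

Global Instance eqv_equiv : Equivalence eqv.
Proof. split; [by move=> a F| by move=> a b H F; rewrite H | by move=> a b c H1 H2 F; rewrite H1 H2]. Qed.
Global Instance eadd_proper : Proper (eqv ==> eqv ==> eqv) (@eadd K G).
Proof. by move=> a a' Ha b b' Hb F; rewrite !ev_cat Ha Hb. Qed.
Global Instance escale_proper c : Proper (eqv ==> eqv) (@escale K G c).
Proof. by move=> a a' Ha F; rewrite !ev_scale Ha. Qed.
Global Instance emul_proper : Proper (eqv ==> eqv ==> eqv) (emul chi).
Proof.
move=> a a' Ha b b' Hb F; rewrite ev_emul_l Ha -ev_emul_l !ev_emul.
by apply: eq_bigr => s _; rewrite Hb.
Qed.

Lemma mulDl (a b c : elt) : emul chi (eadd a b) c = eadd (emul chi a c) (emul chi b c).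
Proof. by rewrite /emul /eadd allpairs_cat. Qed.
Lemma mulZl k (a b : elt) : emul chi (escale k a) b = escale k (emul chi a b).
Proof.
rewrite /emul /escale allpairs_mapl map_allpairs; apply: eq_allpairs => s t /=.
by rewrite !mulrA.
Qed.
Lemma mulZr k (a b : elt) : emul chi a (escale k b) = escale k (emul chi a b).
Proof.
rewrite /emul /escale allpairs_mapr map_allpairs; apply: eq_allpairs => s t /=.
by rewrite !mulrA [_ * k]mulrC.
Qed.
Lemma chiwD w (h h' : G) : chiw chi w (h + h') = chiw chi w h * chiw chi w h'.
Proof. by rewrite /chiw -big_split; apply: eq_bigr => i _; rewrite chiM. Qed.
Lemma chiw_cat w w' (h : G) : chiw chi (w ++ w') h = chiw chi w h * chiw chi w' h.
Proof. by rewrite /chiw big_cat. Qed.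
Lemma mulA (a b c : elt) : emul chi (emul chi a b) c = emul chi a (emul chi b c).
Proof.
elim: a => [//|s a IH].
rewrite /emul /= allpairs_cat -/(emul chi a b) -/(emul chi (emul chi a b) c) IH.
congr (_ ++ _); rewrite allpairs_mapl map_allpairs; apply: eq_allpairs => t u /=.
by rewrite chiw_cat chiwD addrA catA; congr (_, _, _); ring.
Qed.

Lemma mulDr (a b c : elt) : eqv (emul chi a (eadd b c)) (eadd (emul chi a b) (emul chi a c)).
Proof.
move=> F; rewrite ev_cat !ev_emul -big_split; apply: eq_bigr => s _ /=.
by rewrite ev_cat mulrDr.
Qed.

Lemma gw_cat w w' : gw g (w ++ w') = gw g w + gw g w'.
Proof. by rewrite /gw big_cat. Qed.
Lemma pdeg_catl a a' b : pdeg g chi (a ++ a') b = pdeg g chi a b * pdeg g chi a' b.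
Proof. by rewrite /pdeg chiw_cat. Qed.
Lemma pdeg_catr a b b' : pdeg g chi a (b ++ b') = pdeg g chi a b * pdeg g chi a b'.
Proof. by rewrite /pdeg gw_cat chiwD. Qed.

Notation br := (sbracket g chi).

Lemma jacobi a b c (u v w : elt) :
  eqv (br a (b ++ c) u (br b c v w))
      (eadd (br (a ++ b) c (br a b u v) w)
        (eadd (escale (- pdeg g chi b c) (emul chi (br a c u w) v))
              (escale (pdeg g chi a b) (emul chi v (br a c u w))))).
Proof.
rewrite /sbracket; repeat progress rewrite ?mulDl ?mulZl ?mulZr ?mulA ?mulDr.
move=> F; repeat progress rewrite ?ev_cat ?ev_scale ?pdeg_catl ?pdeg_catr; ring.
Qed.

Lemma mul_eq1 (x y : K) : x * y = 1 -> y = x^-1 /\ x != 0.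
Proof.
move=> H; have Hx : x != 0 by apply/eqP => E; move: H; rewrite E mul0r => /eqP; rewrite eq_sym oner_eq0.
by split=> //; rewrite -[y]mul1r -(mulVf Hx) -mulrA H mulr1.
Qed.

Ltac norm_eqv := rewrite /sbracket; repeat progress rewrite ?mulDl ?mulZl ?mulZr ?mulA ?mulDr;
  move=> F; repeat progress rewrite ?ev_cat ?ev_scale ?pdeg_catl ?pdeg_catr.

Lemma rev_id da db (u v : elt) : pdeg g chi da db * pdeg g chi db da = 1 ->
  eqv (br db da v u) (escale (- pdeg g chi db da) (br da db u v)).
Proof.
move=> H; have [Ey Hx] := mul_eq1 H; norm_eqv; rewrite Ey; by field.
Qed.

Lemma mul_eqc (x y c : K) : x * y = c -> c != 0 -> x = c / y /\ y != 0.
Proof.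
move=> H Hc; have Hy : y != 0 by apply/eqP => E; move: Hc; rewrite -H E mulr0 eqxx.
by split=> //; rewrite -H mulfK.
Qed.

Lemma serre_id da db (a b : elt) qq : pdeg g chi db db = qq ->
  pdeg g chi da db * pdeg g chi db da = qq^-1 -> qq != 0 ->
  eqv (br db (db ++ da) b (br db da b a))
      (escale (pdeg g chi db da ^+ 2 * qq) (br (da ++ db) db (br da db a b) b)).
Proof.
move=> Hb H Hq; have [Ex Hx] := mul_eqc H (invr_neq0 Hq).
norm_eqv; rewrite Ex Hb; field; by rewrite ?Hq ?Hx.
Qed.

Lemma core_id dA dB dC (A B C : elt) qq a c d :
  pdeg g chi dA dA = qq -> pdeg g chi dB dB = qq -> pdeg g chi dC dC = qq ->
  pdeg g chi dA dB = a -> pdeg g chi dB dA = (qq * a)^-1 ->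
  pdeg g chi dA dC = c -> pdeg g chi dC dA = (qq * c)^-1 ->
  pdeg g chi dB dC = d -> pdeg g chi dC dB = d^-1 ->
  qq != 0 -> a != 0 -> c != 0 -> d != 0 -> 1 + qq != 0 ->
  let SAB := br dA (dA ++ dB) A (br dA dB A B) in
  let SCA := br (dC ++ dA) dA (br dC dA C A) A in
  let CB := br dC dB C B in
  eqv (br (dA ++ dB) (dA ++ dC) (br dA dB A B) (br dA dC A C))
   (escale (1 + qq)^-1
    (eadd (escale (c ^+ 2 * d / a) (emul chi C SAB))
    (eadd (escale (- a^-1) (emul chi SAB C))
    (eadd (escale (- (qq * a * c ^+ 2)) (emul chi B SCA))
    (eadd (escale (qq * c ^+ 2 * d / a) (emul chi SCA B))
    (eadd (escale (- (d / a)) (emul chi A (emul chi A CB)))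
    (eadd (escale ((1 + qq) * c * d) (emul chi (emul chi A CB) A))
          (escale (- (qq * a * c ^+ 2 * d)) (emul chi CB (emul chi A A)))))))))).
Proof.
move=> HA HB HC H1 H2 H3 H4 H5 H6 Hq Ha Hc Hd H1q SAB SCA CB.
rewrite /SAB /SCA /CB.
norm_eqv; rewrite ?HA ?HB ?HC ?H1 ?H2 ?H3 ?H4 ?H5 ?H6; field; by rewrite Hd Ha Hc Hq H1q.
Qed.

Variable n : nat.

Inductive J : elt -> Prop :=
| J0 : J [::]
| Jrel t : is_rel n t -> J (bval n g chi t)
| Jadd a b : J a -> J b -> J (eadd a b)
| Jml c a : J a -> J (emul chi c a)
| Jmr a c : J a -> J (emul chi a c)
| Jsc k a : J a -> J (escale k a)
| Jeqv a b : eqv a b -> J a -> J b.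

Definition ueq (a b : elt) := J (eadd a (escale (-1) b)).

Global Instance J_proper : Proper (eqv ==> iff) J.
Proof. by move=> a b H; split; apply: Jeqv; [|symmetry]. Qed.

Global Instance ueq_equiv : Equivalence ueq.
Proof.
split.
- move=> a; apply: (Jeqv _ J0) => F; rewrite ev_cat ev_scale ev_nil; ring.
- move=> a b H; apply: (Jeqv _ (Jsc (-1) H)) => F; rewrite !ev_scale !ev_cat !ev_scale; ring.
- move=> a b c H1 H2; apply: (Jeqv _ (Jadd H1 H2)) => F; rewrite !ev_cat !ev_scale; ring.
Qed.
Global Instance eqv_ueq_sub : subrelation eqv ueq.
Proof. move=> a b H; apply: (Jeqv _ J0) => F; rewrite ev_cat ev_scale ev_nil H; ring. Qed.
Global Instance ueq_eadd : Proper (ueq ==> ueq ==> ueq) (@eadd K G).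
Proof.
move=> a a' Ha b b' Hb; apply: (Jeqv _ (Jadd Ha Hb)) => F; rewrite !ev_cat !ev_scale !ev_cat; ring.
Qed.
Global Instance ueq_escale k : Proper (ueq ==> ueq) (@escale K G k).
Proof.
move=> a a' Ha; apply: (Jeqv _ (Jsc k Ha)) => F; rewrite !ev_cat !ev_scale !ev_cat !ev_scale; ring.
Qed.
Global Instance ueq_emul : Proper (ueq ==> ueq ==> ueq) (emul chi).
Proof.
move=> a a' Ha b b' Hb.
have H1 : ueq (emul chi a b) (emul chi a' b).
  apply: (Jeqv _ (Jmr b Ha)); rewrite mulDl mulZl; reflexivity.
have H2 : ueq (emul chi a' b) (emul chi a' b').
  apply: (Jeqv _ (Jml a' Hb)); rewrite mulDr mulZr; reflexivity.
by transitivity (emul chi a' b).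
Qed.
Global Instance ueq_br da db : Proper (ueq ==> ueq ==> ueq) (br da db).
Proof. by move=> a a' Ha b b' Hb; rewrite /sbracket Ha Hb; reflexivity. Qed.

Lemma emul0l (a : elt) : eqv (emul chi [::] a) [::].
Proof. by []. Qed.
Lemma emul0r (a : elt) : eqv (emul chi a [::]) [::].
Proof. by move=> F; rewrite ev_emul ev_nil big1 // => s _; rewrite ev_nil mulr0. Qed.
Lemma br0l da db (a : elt) : eqv (br da db [::] a) [::].
Proof. by rewrite /sbracket emul0l emul0r. Qed.
Lemma br0r da db (a : elt) : eqv (br da db a [::]) [::].
Proof. by rewrite /sbracket emul0l emul0r. Qed.


Notation bv := (bval n g chi).
Notation dg t := (map (letter n) (frontier t)).
Definition comm0 (t1 t2 : btree nat) := ueq (bv (BNode t1 t2)) [::].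

Lemma jac_t u v w : ueq (bv (BNode u (BNode v w)))
  (eadd (bv (BNode (BNode u v) w))
   (eadd (escale (- pdeg g chi (dg v) (dg w)) (emul chi (bv (BNode u w)) (bv v)))
         (escale (pdeg g chi (dg u) (dg v)) (emul chi (bv v) (bv (BNode u w)))))).
Proof. by rewrite /= map_cat jacobi map_cat; reflexivity. Qed.

Lemma C1 u v w : comm0 u v -> comm0 u w -> comm0 u (BNode v w).
Proof.
rewrite /comm0 jac_t => Huv Huw; move: Huv Huw; rewrite /= => Huv Huw.
rewrite Huv Huw br0l !emul0l emul0r.
apply: eqv_ueq_sub => F; rewrite !ev_cat !ev_scale ev_nil; ring.
Qed.

Lemma C2 u v w : comm0 u w -> ueq (bv (BNode u (BNode v w))) (bv (BNode (BNode u v) w)).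
Proof.
rewrite /comm0 jac_t => Huw; move: Huw; rewrite /= => Huw.
rewrite Huw !emul0l emul0r.
apply: eqv_ueq_sub => F; rewrite !ev_cat !ev_scale ev_nil; ring.
Qed.

Lemma C3 u v w : comm0 u w -> comm0 v w -> comm0 (BNode u v) w.
Proof.
move=> Huw Hvw; rewrite /comm0 -C2 //.
move: Hvw; rewrite /comm0 /= => Hvw; rewrite Hvw br0r; reflexivity.
Qed.

Lemma Crev u v : pdeg g chi (dg u) (dg v) * pdeg g chi (dg v) (dg u) = 1 ->
  comm0 u v -> comm0 v u.
Proof.
move=> H; rewrite /comm0 /= (rev_id _ _ H) => Huv; rewrite Huv.
apply: eqv_ueq_sub => F; rewrite ev_scale ev_nil; ring.
Qed.

Lemma Z_l t w : ueq (bv t) [::] -> ueq (bv (BNode t w)) [::].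
Proof. by move=> H; rewrite /= H br0l; reflexivity. Qed.
Lemma Z_r t w : ueq (bv t) [::] -> ueq (bv (BNode w t)) [::].
Proof. by move=> H; rewrite /= H br0r; reflexivity. Qed.

Lemma cong_node l r l' r' : dg l = dg l' -> dg r = dg r' ->
  ueq (bv l) (bv l') -> ueq (bv r) (bv r') -> ueq (bv (BNode l r)) (bv (BNode l' r')).
Proof. by move=> E1 E2 H1 H2; rewrite /= E1 E2 H1 H2; reflexivity. Qed.


Fixpoint rc (u : btree nat) (s : seq (btree nat)) : btree nat :=
  match s with [::] => u | v :: s' => BNode u (rc v s') end.
Fixpoint allP (P : btree nat -> Prop) (s : seq (btree nat)) : Prop :=
  match s with [::] => True | w :: s' => P w /\ allP P s' end.
Fixpoint nc (s : seq (btree nat)) : Prop :=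
  match s with [::] => True | u :: s' => allP (comm0 u) (behead s') /\ nc s' end.

Lemma allP_cat P s1 s2 : allP P (s1 ++ s2) <-> allP P s1 /\ allP P s2.
Proof. elim: s1 => [|a s1 IH] /=; [tauto | rewrite IH; tauto]. Qed.

Lemma nc_cat s1 s2 : nc (s1 ++ s2) -> nc s1 /\ nc s2.
Proof.
elim: s1 => [|a s1 IH] //= [H1 H2]; have [IH1 IH2] := IH H2; split=> //; split=> //.
case: s1 {IH IH1 H2} H1 => [//|b s1] /=; by case/allP_cat.
Qed.

Lemma dg_rc u s : dg (rc u s) = flatten [seq dg t | t <- u :: s].
Proof.
elim: s u => [|v s IH] u /=; first by rewrite cats0.
by rewrite map_cat IH.
Qed.

Lemma dg_bjoin (T : btree (btree nat)) : dg (bjoin T) = flatten [seq dg t | t <- frontier T].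
Proof. elim: T => [t|L IHL R IHR] /=; first by rewrite cats0. by rewrite map_cat IHL IHR map_cat flatten_cat. Qed.

Lemma frontier_ne (A : Type) (T : btree A) : exists u s, frontier T = u :: s.
Proof.
elim: T => [a|L [u [s E]] R _] /=; first by exists a, [::].
by exists u, (s ++ frontier R); rewrite E.
Qed.

Lemma lemB u v s : allP (comm0 u) (v :: s) -> comm0 u (rc v s).
Proof.
elim: s v => [|w s IH] v /= [H1 H2] //; apply: C1 => //; exact: IH.
Qed.

Lemma lemA u s1 v s2 : nc (u :: s1 ++ v :: s2) ->
  ueq (bv (BNode (rc u s1) (rc v s2))) (bv (rc u (s1 ++ v :: s2))).
Proof.
elim: s1 u => [|u' s1 IH] u; first by move=> _; reflexivity.
move=> [Hu Hn].
have Hc : comm0 u (rc v s2).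
  apply: lemB; move: Hu => /=; by case/allP_cat.
change (ueq (bv (BNode (BNode u (rc u' s1)) (rc v s2))) (bv (BNode u (rc u' (s1 ++ v :: s2))))).
rewrite -(C2 _ Hc).
apply: cong_node => //.
  by rewrite [frontier (BNode _ _)]/= map_cat !dg_rc -flatten_cat -map_cat.
  reflexivity.
exact: IH.
Qed.

Lemma indep (T : btree (btree nat)) u s : frontier T = u :: s -> nc (u :: s) ->
  ueq (bv (bjoin T)) (bv (rc u s)).
Proof.
elim: T u s => [t|L IHL R IHR] u s /=.
  by case=> -> <- _; reflexivity.
have [u1 [s1 EL]] := frontier_ne L; have [v [s2 ER]] := frontier_ne R.
rewrite EL ER /= => -[<- <-] Hn.
have [Hn1 Hn2] := nc_cat (s1 := u1 :: s1) Hn.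
rewrite -(lemA Hn).
apply: cong_node; [by rewrite dg_bjoin dg_rc EL | by rewrite dg_bjoin dg_rc ER | exact: IHL | exact: IHR].
Qed.


Variable q : K.
Hypothesis hn : (2 <= n)%N.
Hypothesis hq0 : q != 0.
Hypothesis hq1 : q != -1.
Hypothesis hpii : forall i, (1 <= i)%N -> (i < n)%N -> pp g chi i i = q.
Hypothesis hpi1 : forall i, (1 < i)%N -> (i < n)%N -> pp g chi i i.-1 * pp g chi i.-1 i = q^-1.
Hypothesis hpij : forall i j, (1 <= i)%N -> (i.+1 < j)%N -> (j <= n)%N -> pp g chi i j * pp g chi j i = 1.

Lemma bv_node l r : bv (BNode l r) = br (dg l) (dg r) (bv l) (bv r).
Proof. by []. Qed.
Lemma dg_node l r : dg (BNode l r) = dg l ++ dg r.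
Proof. by rewrite /= map_cat. Qed.
Lemma dg_leaf i : dg (BLeaf i) = [:: letter n i].
Proof. by []. Qed.

Lemma letter_id i : (i <= n)%N -> letter n i = i.
Proof. by rewrite /letter => ->. Qed.

Lemma pdeg11 a b : pdeg g chi [:: a] [:: b] = pp g chi a b.
Proof. by rewrite /pdeg /chiw /gw !big_cons !big_nil addr0 mulr1. Qed.

Lemma relU t : is_rel n t -> ueq (bv t) [::].
Proof. move=> H; rewrite /ueq /eadd /= cats0; exact: Jrel. Qed.

Lemma comm_rel a b : (1 <= a)%N -> (a.+1 < b)%N -> (b <= n)%N -> comm0 (BLeaf a) (BLeaf b).
Proof. move=> h1 h2 h3; apply: relU; right; left; by exists a, b. Qed.

Lemma comm_rel' a b : (1 <= a)%N -> (a.+1 < b)%N -> (b <= n)%N -> comm0 (BLeaf b) (BLeaf a).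
Proof.
move=> h1 h2 h3; apply: Crev; last exact: comm_rel.
rewrite !dg_leaf !pdeg11 !letter_id ?(hpij h1 h2 h3) //; lia.
Qed.

Lemma serre_t j : (1 <= j)%N -> (j.+1 < n)%N ->
  comm0 (BLeaf j.+1) (BNode (BLeaf j.+1) (BLeaf j)).
Proof.
move=> h1 h2.
have Hb : pdeg g chi [:: letter n j.+1] [:: letter n j.+1] = q.
  by rewrite pdeg11 letter_id ?hpii // ltnW.
have Hp : pdeg g chi [:: letter n j] [:: letter n j.+1] * pdeg g chi [:: letter n j.+1] [:: letter n j] = q^-1.
  rewrite !pdeg11 !letter_id 1?mulrC ?(hpi1 (i := j.+1)) //; lia.
rewrite /comm0 !bv_node !dg_node !dg_leaf (serre_id _ _ Hb Hp hq0).
have := relU (t := BNode (BNode (BLeaf j) (BLeaf j.+1)) (BLeaf j.+1)).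
rewrite !bv_node !dg_node !dg_leaf => ->; last by left; exists j; split=> //; split=> //; right.
apply: eqv_ueq_sub => F; rewrite ev_scale ev_nil; ring.
Qed.


Lemma bv_leaf i : bv (BLeaf i) = xgen K G (letter n i).
Proof. by []. Qed.

Lemma nz_of (x y c : K) : x * y = c -> c != 0 -> x != 0 /\ y != 0.
Proof.
move=> H Hc; split; apply/eqP => E; move: Hc; by rewrite -H E ?mulr0 ?mul0r eqxx.
Qed.

Lemma core_t j : (1 <= j)%N -> (j.+2 < n)%N ->
  ueq (bv (BNode (BNode (BLeaf j.+1) (BLeaf j.+2)) (BNode (BLeaf j.+1) (BLeaf j)))) [::].
Proof.
move=> h1 h2.
have L0 : letter n j = j by rewrite letter_id //; lia.
have L1 : letter n j.+1 = j.+1 by rewrite letter_id //; lia.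
have L2 : letter n j.+2 = j.+2 by rewrite letter_id //; lia.
have R1 := relU (t := BNode (BLeaf j.+1) (BNode (BLeaf j.+1) (BLeaf j.+2))).
have R2 := relU (t := BNode (BNode (BLeaf j) (BLeaf j.+1)) (BLeaf j.+1)).
have R3 := relU (t := BNode (BLeaf j) (BLeaf j.+2)).
rewrite !bv_node !dg_node !dg_leaf !bv_leaf L0 L1 L2 in R1 R2 R3.
have {}R1 := R1 (or_introl (ex_intro _ j.+1 (conj (ltnW h1) (conj h2 (or_introl erefl))))).
have {}R2 := R2 (or_introl (ex_intro _ j (conj h1 (conj (ltn_trans (ltnSn _) h2) (or_intror erefl))))).
have {}R3 : ueq (br [:: j] [:: j.+2] (xgen K G j) (xgen K G j.+2)) [::].
  apply: R3; right; left; exists j, j.+2; do 3!split => //; lia.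
rewrite !bv_node !dg_node !dg_leaf !bv_leaf L0 L1 L2.
have HA : pdeg g chi [:: j.+1] [:: j.+1] = q by rewrite pdeg11 hpii //; lia.
have HB : pdeg g chi [:: j.+2] [:: j.+2] = q by rewrite pdeg11 hpii //; lia.
have HC : pdeg g chi [:: j] [:: j] = q by rewrite pdeg11 hpii //; lia.
have P1 : pp g chi j.+2 j.+1 * pp g chi j.+1 j.+2 = q^-1 by apply: (hpi1 (i := j.+2)); lia.
have P2 : pp g chi j.+1 j * pp g chi j j.+1 = q^-1 by apply: (hpi1 (i := j.+1)); lia.
have P3 : pp g chi j j.+2 * pp g chi j.+2 j = 1 by apply: hpij => //; lia.
have qi : q^-1 != 0 by rewrite invr_eq0.
have [Na Na'] := nz_of P1 qi; have [Nc Nc'] := nz_of P2 qi; have [Nd Nd'] := nz_of P3 (oner_neq0 _).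
have H1q : 1 + q != 0.
  by rewrite addrC addr_eq0.
have F1 : pp g chi j.+2 j.+1 = (q * pp g chi j.+1 j.+2)^-1.
  by rewrite (mul_eqc P1 qi).1 invfM.
have F2 : pp g chi j j.+1 = (q * pp g chi j.+1 j)^-1.
  by rewrite mulrC in P2; rewrite (mul_eqc P2 qi).1 invfM mulrC.
have F3 : pp g chi j j.+2 = (pp g chi j.+2 j)^-1.
  by rewrite (mul_eqc P3 (oner_neq0 _)).1 mul1r.
have E := @core_id [:: j.+1] [:: j.+2] [:: j] (xgen K G j.+1) (xgen K G j.+2) (xgen K G j) q (pp g chi j.+1 j.+2) (pp g chi j.+1 j) (pp g chi j.+2 j).
cbv zeta in E; rewrite !pdeg11 in E HA HB HC.
rewrite E //; try by rewrite pdeg11.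
rewrite R1 R2 R3 !emul0l !emul0r /eadd /escale /=; reflexivity.
Qed.

Local Open Scope nat_scope.
Fixpoint Dt (j0 d : nat) : btree nat :=
  match d with 0 => BLeaf j0 | d'.+1 => BNode (BLeaf (j0 + d'.+1)) (Dt j0 d') end.

Lemma S0 j0 d i : (1 <= j0)%N -> (j0 + d + 2 <= i)%N -> (i <= n)%N -> comm0 (BLeaf i) (Dt j0 d).
Proof.
move=> h1; elim: d => [|d IH] h2 h3 /=.
  apply: comm_rel' => //; lia.
apply: C1; [apply: comm_rel'; lia | apply: IH => //; lia].
Qed.

Lemma H1 j0 d : (1 <= j0)%N -> ((j0 + d).+2 <= n)%N ->
  ueq (bv (BNode (BLeaf (j0 + d).+2) (Dt j0 d.+1)))
      (bv (BNode (BNode (BLeaf (j0 + d).+2) (BLeaf (j0 + d.+1))) (Dt j0 d))).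
Proof.
move=> h1 h2; change (Dt j0 d.+1) with (BNode (BLeaf (j0 + d.+1)) (Dt j0 d)).
apply: C2; apply: S0 => //; lia.
Qed.

Lemma S1 j0 d : (1 <= j0)%N -> ((j0 + d).+1 < n)%N ->
  comm0 (BLeaf (j0 + d).+1) (BNode (BLeaf (j0 + d).+1) (Dt j0 d)).
Proof.
move=> h1; case: d => [|d] h2.
  rewrite addn0 /=; apply: serre_t => //; lia.
rewrite addnS; rewrite addnS in h2.
rewrite /comm0.
have E := H1 h1 (ltnW h2).
rewrite (cong_node (l := BLeaf (j0 + d).+2) (l' := BLeaf (j0 + d).+2) _ _ _ E); last reflexivity; first last.
- by rewrite /= ?map_cat ?catA.
- by [].
rewrite C2; last by apply: S0 => //; lia.
apply: Z_l; rewrite -addnS; apply: serre_t; lia.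
Qed.

Lemma S2 j0 d : (1 <= j0)%N -> ((j0 + d).+2 < n)%N ->
  comm0 (BLeaf (j0 + d).+1) (BNode (BLeaf (j0 + d).+2) (BNode (BLeaf (j0 + d).+1) (Dt j0 d))).
Proof.
move=> h1 h2; rewrite /comm0 C2; last by apply: S1 => //; lia.
case: d h2 => [|d] h2.
  rewrite addn0 /=; apply: core_t => //.
  by rewrite addn0 in h2.
rewrite addnS; rewrite addnS in h2.
have E := H1 h1 (ltnW (ltnW h2)).
rewrite (cong_node (l := BNode (BLeaf (j0 + d).+2) (BLeaf (j0 + d).+3)) (l' := BNode (BLeaf (j0 + d).+2) (BLeaf (j0 + d).+3)) _ _ _ E); last reflexivity; first last.
- by rewrite /= ?map_cat ?catA.
- by [].
rewrite C2; last by apply: C3; apply: S0 => //; lia.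
apply: Z_l; rewrite -addnS; apply: core_t; lia.
Qed.

Lemma L4 j0 i e : (1 <= j0)%N -> (j0 < i)%N -> (i <= j0 + e)%N -> (j0 + e < n)%N ->
  comm0 (BLeaf i) (Dt j0 e).
Proof.
move=> h1; elim: e => [|e IH] h2 h3 h4; first lia.
have [Ei|Ni] := eqVneq i (j0 + e.+1).
  subst i; change (Dt j0 e.+1) with (BNode (BLeaf (j0 + e.+1)) (Dt j0 e)); rewrite addnS; apply: S1 => //; lia.
have [Ei1|Ni1] := eqVneq i.+1 (j0 + e.+1).
  case: e IH h3 h4 Ei1 Ni => [|e] IH h3 h4 Ei1 Ni; first lia.
  have -> : i = (j0 + e).+1 by lia.
  change (Dt j0 e.+2) with (BNode (BLeaf (j0 + e.+2)) (BNode (BLeaf (j0 + e.+1)) (Dt j0 e))).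
  rewrite !addnS; apply: S2 => //; lia.
change (Dt j0 e.+1) with (BNode (BLeaf (j0 + e.+1)) (Dt j0 e)).
apply: C1; [apply: comm_rel; lia | apply: IH; lia].
Qed.


Fixpoint tmap (f : nat -> nat) (t : btree nat) : btree nat :=
  match t with BLeaf i => BLeaf (f i) | BNode l r => BNode (tmap f l) (tmap f r) end.

Lemma letter_idem i : letter n (letter n i) = letter n i.
Proof.
have h : letter n i <= n by rewrite /letter; case: ifP => //; lia.
by rewrite {1}/letter h.
Qed.

Lemma frontier_tmap f t : frontier (tmap f t) = map f (frontier t).
Proof. elim: t => [i|l IHl r IHr] //=; by rewrite IHl IHr map_cat. Qed.

Lemma map_letter_idem s : map (letter n) (map (letter n) s) = map (letter n) s.
Proof. by rewrite -map_comp; apply: eq_map => x /=; rewrite letter_idem. Qed.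

Lemma bv_tmap t : bv (tmap (letter n) t) = bv t.
Proof.
elim: t => [i|l IHl r IHr] /=; first by rewrite letter_idem.
by rewrite IHl IHr !frontier_tmap !map_letter_idem.
Qed.

Lemma letter_hi a : n < a -> letter n a = 2 * n - a.
Proof. by rewrite /letter; case: ifP => //; lia. Qed.

Lemma tmap_rcomb a d : n < a -> a + d < 2 * n ->
  tmap (letter n) (rcomb a (iota a.+1 d)) = Dt (letter n (a + d)) d.
Proof.
elim: d a => [|d IH] a h1 h2; first by rewrite addn0.
rewrite /= IH; [|lia|lia].
rewrite -addSnnS; congr (BNode (BLeaf _) _).
  rewrite !letter_hi; lia.
by rewrite addSnnS.
Qed.

Lemma comm_ym k m i : (1 <= k)%N -> (k <= n)%N -> (2 * n - k < m)%N -> (m < 2 * n)%N ->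
  (k <= i)%N -> (i < n)%N -> comm0 (BLeaf i) (ym n m).
Proof.
move=> h1 h2 h3 h4 h5 h6.
have E : bv (BNode (BLeaf i) (ym n m)) = bv (BNode (BLeaf i) (tmap (letter n) (ym n m))).
  by rewrite !bv_node bv_tmap frontier_tmap map_letter_idem.
rewrite /comm0 E /ym tmap_rcomb; [|lia|lia].
apply: L4; rewrite ?letter_hi; lia.
Qed.

Lemma allP_iota (P : btree nat -> Prop) a len :
  (forall j, a <= j < a + len -> P (BLeaf j)) -> allP P [seq BLeaf i | i <- iota a len].
Proof.
elim: len a => [|len IH] a H //=; split; first by apply: H; lia.
by apply: IH => j hj; apply: H; lia.
Qed.

Lemma nc_atoms k Y : 1 <= k -> (forall i, k <= i < n -> comm0 (BLeaf i) Y) ->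
  forall d k', n - k' = d -> k <= k' <= n -> nc ([seq BLeaf i | i <- iota k' (n - k').+1] ++ [:: Y]).
Proof.
move=> hk HY; elim=> [|d IH] k' E hk'; rewrite E.
  by rewrite /=.
split.
  rewrite /=; apply/allP_cat; split; last by split=> //; apply: HY; lia.
  apply: allP_iota => j hj; apply: comm_rel; lia.
have := IH k'.+1 _ _; rewrite (_ : n - k'.+1 = d); last by lia.
by apply; lia.
Qed.


Theorem main_alg k m : 1 <= k -> k <= n -> 2 * n - k < m -> m < 2 * n ->
  forall T1 T2 : btree (btree nat), frontier T1 = atoms n k m -> frontier T2 = atoms n k m ->
  ueq (bv (bjoin T1)) (bv (bjoin T2)).
Proof.
move=> h1 h2 h3 h4 T1 T2 E1 E2.
have Ha : atoms n k m = BLeaf k :: ([seq BLeaf i | i <- iota k.+1 (n - k)] ++ [:: ym n m]) by [].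
have Hn : nc (atoms n k m).
  apply: (nc_atoms h1 _ (erefl (n - k))); last by lia.
  move=> i hi; apply: (comm_ym h1 h2 h3 h4); lia.
rewrite Ha in E1 E2 Hn.
by rewrite (indep E1 Hn) (indep E2 Hn); reflexivity.
Qed.


Local Open Scope ring_scope.
Definition goodw (w : seq nat) := all (fun i => (0 < i <= n)%N) w.
Definition pi (a : elt) : elt := filter (fun t => goodw t.2) a.

Lemma pi_cat (a b : elt) : pi (eadd a b) = eadd (pi a) (pi b).
Proof. by rewrite /pi /eadd filter_cat. Qed.
Lemma pi_scale k (a : elt) : pi (escale k a) = escale k (pi a).
Proof. by rewrite /pi /escale filter_map. Qed.
Lemma pi_emul (a b : elt) : pi (emul chi a b) = emul chi (pi a) (pi b).
Proof.
elim: a => [//|s a IH]; rewrite /emul /= -/(emul chi a b) {1}/pi filter_cat -/(pi (emul chi a b)) IH.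
case: ifP => hs /=; last first.
  rewrite (_ : filter _ _ = [::]) //; elim: (b) => //= t b' ->.
  by rewrite /goodw all_cat -/(goodw s.2) hs.
rewrite filter_map /=; congr (_ ++ _); congr map; apply: eq_filter => t /=.
by rewrite /goodw all_cat -/(goodw s.2) hs.
Qed.
Lemma pi_eqv (a b : elt) : eqv a b -> eqv (pi a) (pi b).
Proof.
move=> H F; have E x : ev F (pi x) = ev (fun h w => if goodw w then F h w else 0) x.
  by rewrite /ev /pi big_filter big_mkcond; apply: eq_bigr => t _; case: ifP; rewrite ?mulr0.
by rewrite !E H.
Qed.
Lemma pi_id (a : elt) : inGX n a -> pi a = a.
Proof. by move=> H; apply/all_filterP. Qed.

Lemma one_l (a : elt) : emul chi [:: (1, 0, [::])] a = a.
Proof.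
rewrite /emul /= cats0 -[RHS]map_id; apply: eq_map => -[[c h] w] /=.
by rewrite /chiw big_nil mul1r mulr1 add0r.
Qed.
Lemma one_r (a : elt) : emul chi a [:: (1, 0, [::])] = a.
Proof.
rewrite /emul allpairs1r -[RHS]map_id; apply: eq_map => -[[c h] w] /=.
by rewrite mulr1 addr0 cats0 /chiw big1 ?mulr1 // => i _; rewrite chi0.
Qed.

Lemma inGX_cat (a b : elt) : inGX n (eadd a b) = inGX n a && inGX n b.
Proof. by rewrite /inGX /eadd all_cat. Qed.
Lemma inGX_scale k (a : elt) : inGX n (escale k a) = inGX n a.
Proof. by rewrite /inGX /escale all_map. Qed.
Lemma inGX_emul (a b : elt) : inGX n a -> inGX n b -> inGX n (emul chi a b).
Proof.
move=> Ha Hb; apply/seq.allP => t /allpairsP [[s u] [hs hu ->]] /=.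
by rewrite all_cat (seq.allP Ha s hs) (seq.allP Hb u hu).
Qed.

Definition Iz (x : elt) := exists z, in_ideal n g chi z /\ eqv x z.

Lemma in_ideal_cat (z1 z2 : elt) : in_ideal n g chi z1 -> in_ideal n g chi z2 -> in_ideal n g chi (z1 ++ z2).
Proof.
move=> H1; elim=> [|z a b t _ IH Ha Hb Ht]; first by rewrite cats0.
rewrite /eadd catA; exact: in_idealS.
Qed.

Lemma Iz_cat (x y : elt) : Iz x -> Iz y -> Iz (eadd x y).
Proof. move=> [z1 [H1 E1]] [z2 [H2 E2]]; exists (z1 ++ z2); split; [exact: in_ideal_cat | by rewrite E1 E2]. Qed.

Lemma Iz_eqv (x y : elt) : eqv x y -> Iz x -> Iz y.
Proof. move=> E [z [H1 E1]]; exists z; split=> //; by rewrite -E. Qed.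

Lemma Iz_scale k (x : elt) : Iz x -> Iz (escale k x).
Proof.
move=> [z [Hz E]]; apply: (Iz_eqv (x := escale k z)); first by rewrite E.
elim: Hz => [|z' a b t _ [z'' [H1 E1]] Ha Hb Ht]; first by exists [::]; split; [constructor | reflexivity].
exists (eadd z'' (emul chi (emul chi (escale k a) (bval n g chi t)) b)); split.
  by apply: in_idealS => //; rewrite inGX_scale.
by rewrite /escale map_cat -/(escale k z') -/(escale k _) E1 !mulZl.
Qed.

Lemma Iz_ml (c x : elt) : inGX n c -> Iz x -> Iz (emul chi c x).
Proof.
move=> Hc [z [Hz E]]; apply: (Iz_eqv (x := emul chi c z)); first by rewrite E.
elim: Hz => [|z' a b t _ [z'' [H1 E1]] Ha Hb Ht]; first by exists [::]; split; [constructor | rewrite emul0r; reflexivity].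
exists (eadd z'' (emul chi (emul chi (emul chi c a) (bval n g chi t)) b)); split.
  by apply: in_idealS => //; apply: inGX_emul.
by rewrite mulDr E1 !mulA.
Qed.

Lemma Iz_mr (c x : elt) : inGX n c -> Iz x -> Iz (emul chi x c).
Proof.
move=> Hc [z [Hz E]]; apply: (Iz_eqv (x := emul chi z c)); first by rewrite E.
elim: Hz => [|z' a b t _ [z'' [H1 E1]] Ha Hb Ht]; first by exists [::]; split; [constructor | reflexivity].
exists (eadd z'' (emul chi (emul chi a (bval n g chi t)) (emul chi b c))); split.
  by apply: in_idealS => //; apply: inGX_emul.
by rewrite mulDl E1 !mulA.
Qed.

Lemma inGX_bval t : all (fun i => (0 < letter n i)%N) (frontier t) -> inGX n (bval n g chi t).
Proof.
elim: t => [i|l IHl r IHr] /=.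
  rewrite andbT /inGX /= => h; rewrite h /= andbT /letter; case: ifP => //; lia.
rewrite all_cat => /andP [hl hr]; rewrite /sbracket inGX_cat inGX_scale.
by rewrite !inGX_emul ?IHl ?IHr.
Qed.

Lemma pos_letter i : (0 < i <= n)%N -> (0 < letter n i)%N.
Proof. by move=> /andP [h1 h2]; rewrite letter_id. Qed.

Lemma inGX_rel t : is_rel n t -> inGX n (bval n g chi t).
Proof.
move=> H; apply: inGX_bval.
case: H => [[i [h1 [h2 [->| ->]]]]|[[i [j [h1 [h2 [h3 ->]]]]]|[->| ->]]] /=;
  rewrite ?andbT; apply/and4P || apply/and3P || apply/andP; (try split); apply: pos_letter; lia.
Qed.

Lemma J_ideal x : J x -> Iz (pi x).
Proof.
elim=> {x} [|t Ht|a b _ Ha _ Hb|c a _ Ha|a c _ Ha|k a _ Ha|a b E _ Ha].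
- by exists [::]; split; [constructor | reflexivity].
- rewrite pi_id; last exact: inGX_rel.
  exists (eadd [::] (emul chi (emul chi [:: (1, 0, [::])] (bval n g chi t)) [:: (1, 0, [::])])).
  split; first by apply: in_idealS => //; constructor.
  by rewrite one_l one_r; reflexivity.
- by rewrite pi_cat; apply: Iz_cat.
- by rewrite pi_emul; apply: Iz_ml => //; apply/all_filterP; rewrite /pi filter_id.
- by rewrite pi_emul; apply: Iz_mr => //; apply/all_filterP; rewrite /pi filter_id.
- by rewrite pi_scale; apply: Iz_scale.
- by apply: Iz_eqv Ha; apply: pi_eqv.
Qed.

Lemma eqv_eeq (a b : elt) : eqv a b -> eeq a b.
Proof.
move=> E h w; have C x : coef x h w = ev (fun h' w' => if (h' == h) && (w' == w) then 1 else 0) x.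
  by rewrite /coef /ev big_mkcond; apply: eq_bigr => t _; case: ifP; rewrite ?mulr1 ?mulr0.
by rewrite !C E.
Qed.

End Alg.

Section Transfer.
Variables (K : fieldType) (G : zmodType) (n : nat) (g : nat -> G) (chi chi' : nat -> G -> K).
Hypothesis Hc : forall i h, (0 < i <= n)%N -> chi' i h = chi i h.
Local Open Scope ring_scope.

Lemma chiw_eq w h : all (fun i => (0 < i <= n)%N) w -> chiw chi' w h = chiw chi w h.
Proof. by move=> H; rewrite /chiw; apply: eq_big_seq => i /(seq.allP H) /Hc ->. Qed.

Lemma emul_eq (a b : elt K G) : inGX n a -> emul chi' a b = emul chi a b.
Proof.
elim: a => [//|s a IH] /= /andP [hs ha]; rewrite /emul /= -!/(emul _ a b) IH //.
by congr (_ ++ _); apply: eq_map => t; rewrite chiw_eq.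
Qed.

Lemma pdeg_eq du dv : all (fun i => (0 < i <= n)%N) du -> pdeg g chi' du dv = pdeg g chi du dv.
Proof. by move=> H; rewrite /pdeg chiw_eq. Qed.

Lemma inGX_bval0 t : all (fun i => (0 < letter n i)%N) (frontier t) -> inGX n (bval n g chi t).
Proof.
elim: t => [i|l IHl r IHr] /=.
  rewrite andbT /inGX /= => h; rewrite h /= andbT /letter; case: ifP => //; lia.
rewrite all_cat => /andP [hl hr]; rewrite /sbracket inGX_cat inGX_scale.
by rewrite !inGX_emul ?IHl ?IHr.
Qed.

Lemma good_letters w : all (fun i => (0 < letter n i)%N) w -> all (fun i => (0 < i <= n)%N) (map (letter n) w).
Proof.
move=> H; rewrite all_map; apply/seq.allP => i /(seq.allP H) /= ->.
by rewrite /letter; case: ifP => //; lia.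
Qed.

Lemma bval_eq t : all (fun i => (0 < letter n i)%N) (frontier t) -> bval n g chi' t = bval n g chi t.
Proof.
elim: t => [//|l IHl r IHr] /=; rewrite all_cat => /andP [hl hr].
rewrite IHl // IHr // /sbracket !emul_eq ?inGX_bval0 // pdeg_eq //; exact: good_letters.
Qed.

Lemma rel_good t : (2 <= n)%N -> is_rel n t -> all (fun i => (0 < letter n i)%N) (frontier t).
Proof.
move=> hn H; have P i : (0 < i <= n)%N -> (0 < letter n i)%N by move=> /andP [h1 h2]; rewrite /letter h2.
case: H => [[i [h1 [h2 [->| ->]]]]|[[i [j [h1 [h2 [h3 ->]]]]]|[->| ->]]] /=;
  rewrite ?andbT; apply/and4P || apply/and3P || apply/andP; (try split); apply: P; lia.
Qed.

Lemma ideal_eq z : (2 <= n)%N -> in_ideal n g chi' z -> in_ideal n g chi z.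
Proof.
move=> hn; elim=> [|z0 a b t _ IH Ha Hb Ht]; first by constructor.
have Hg := rel_good hn Ht.
have I : inGX n (emul chi a (bval n g chi t)) := inGX_emul _ Ha (inGX_bval0 Hg).
rewrite (bval_eq Hg) (emul_eq _ Ha) (emul_eq _ I); exact: in_idealS.
Qed.
End Transfer.

Lemma frontier_bjoin (T : btree (btree nat)) : frontier (bjoin T) = flatten [seq frontier t | t <- frontier T].
Proof. elim: T => [t|L IHL R IHR] /=; first by rewrite cats0. by rewrite IHL IHR map_cat flatten_cat. Qed.

Lemma frontier_rcomb a s : frontier (rcomb a s) = a :: s.
Proof. by elim: s a => [|b s IH] a //=; rewrite IH. Qed.

Lemma atoms_good n k m T : (1 <= k)%N -> (k <= n)%N -> (2 * n - k < m)%N -> (m < 2 * n)%N -> frontier T = atoms n k m ->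
  all (fun i => (0 < letter n i)%N) (frontier (bjoin T)).
Proof.
move=> hk hkn hm1 hm E; rewrite frontier_bjoin E /atoms map_cat flatten_cat.
have -> : forall s : seq nat, flatten [seq frontier t | t <- [seq BLeaf i | i <- s]] = s.
  by move=> s; elim: s => [|a s IH] //=; rewrite IH.
rewrite [flatten _]/= cats0 /ym frontier_rcomb.
rewrite all_cat; apply/andP; split.
  apply/seq.allP => i; rewrite mem_iota /letter => /andP [h1 h2]; case: ifP => h3; lia.
apply/seq.allP => i; rewrite inE mem_iota => /orP [/eqP ->|/andP [h1 h2]]; rewrite /letter; case: ifP => h3; lia.
Qed.

Unset Implicit Arguments.
Theorem lemma3p5 (K : fieldType) (G : zmodType) (n : nat)
  (g : nat -> G) (chi : nat -> G -> K) (q : K)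
  (hn : (2 <= n)%N)
  (hchiM : forall i, (1 <= i <= n)%N -> forall a b : G, chi i (a + b) = chi i a * chi i b)
  (hchi0 : forall i, (1 <= i <= n)%N -> forall a : G, chi i a != 0)
  (hq0 : q != 0) (hq3 : q ^+ 3 != 1) (hq1 : q != -1)
  (hpii : forall i, (1 <= i)%N -> (i < n)%N -> pp g chi i i = q)
  (hpnn : pp g chi n n = q ^+ 2)
  (hpi1 : forall i, (1 < i)%N -> (i < n)%N ->
            pp g chi i i.-1 * pp g chi i.-1 i = q^-1)
  (hpn1 : pp g chi n.-1 n * pp g chi n n.-1 = q ^- 2)
  (hpij : forall i j, (1 <= i)%N -> (i.+1 < j)%N -> (j <= n)%N ->
            pp g chi i j * pp g chi j i = 1)
  (k m : nat) (hk : (1 <= k)%N) (hkn : (k <= n)%N)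
  (hm1 : (2 * n - k < m)%N) (hm2 : (m < 2 * n)%N)
  (T1 T2 : btree (btree nat))
  (hT1 : frontier T1 = atoms n k m) (hT2 : frontier T2 = atoms n k m) :
  Ueq n g chi (bval n g chi (bjoin T1)) (bval n g chi (bjoin T2)).
Proof.
pose chi' := fun i h => if (0 < i <= n)%N then chi i h else 1.
have Hc : forall i h, (0 < i <= n)%N -> chi' i h = chi i h by move=> i h hi; rewrite /chi' hi.
have chiM' : forall i a b, chi' i (a + b) = chi' i a * chi' i b.
  by move=> i a b; rewrite /chi'; case: ifP => hi; [exact: hchiM | rewrite mulr1].
have chi0' : forall i, chi' i 0 = 1.
  move=> i; rewrite /chi'; case: ifP => hi //.
  have := hchiM _ hi 0 0; rewrite addr0 => /esym E.
  by apply: (mulfI (hchi0 _ hi 0)); rewrite E mulr1.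
have ppE : forall i j, (0 < i <= n)%N -> pp g chi' i j = pp g chi i j by move=> i j hi; rewrite /pp Hc.
have hpii' : forall i, (1 <= i)%N -> (i < n)%N -> pp g chi' i i = q.
  by move=> i h1 h2; rewrite ppE ?hpii //; apply/andP; split=> //; apply: ltnW.
have hpi1' : forall i, (1 < i)%N -> (i < n)%N -> pp g chi' i i.-1 * pp g chi' i.-1 i = q^-1.
  move=> i h1 h2; rewrite !ppE ?hpi1 //; apply/andP; split; lia.
have hpij' : forall i j, (1 <= i)%N -> (i.+1 < j)%N -> (j <= n)%N -> pp g chi' i j * pp g chi' j i = 1.
  move=> i j h1 h2 h3; rewrite !ppE ?hpij //; apply/andP; split; lia.
have Hm := main_alg chiM' hn hq0 hq1 hpii' hpi1' hpij' hk hkn hm1 hm2 hT1 hT2.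
have [z [Hz Ez]] := J_ideal chiM' chi0' hn hq0 hq1 Hm.
have G1 := atoms_good hk hkn hm1 hm2 hT1; have G2 := atoms_good hk hkn hm1 hm2 hT2.
rewrite pi_id in Ez; last by rewrite inGX_cat inGX_scale !(inGX_bval0 g chi').
rewrite !(bval_eq g Hc) // in Ez.
exists z; split; [exact: (@ideal_eq K G n g chi chi' Hc z hn Hz) | exact: eqv_eeq].
Qed.
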